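(* Let $G$ be a graph whose twin graph $G^*$, with its vertex types, is one of the following: (G7) $G^*$ is $K_4-e$ with a pendant edge attached to one of its degree-3 vertices (so $G^*$ has one vertex of degree 4, one of degree 3, two of degree 2 and one leaf), where the leaf is of type (1), the degree-4 and degree-3 vertices are of type (1K), one of the degree-2 vertices is of type (K) and the other is of type (1); (G8) $G^*$ is $K_4-e$, one of its degree-2 vertices is of type (K), the other is of type (1), one of its degree-3 vertices is of type (N), and the other is of type (1K); (G9) $G^*$ is $C_4$, two adjacent vertices are of type (K) and the other two are of type (1); (G10) $G^*$ is $C_4+K_1$, two adjacent degree-3 vertices are of type (K), the degree-4 vertex is of type (1K), and the other two vertices are of type (1). Then $D(G)\neq n(G)-2$.
   Context: All graphs are finite and simple; $n(G)=|V(G)|$; $N_G(u)$ is the neighborhood of $u$; $K_4-e$ is $K_4$ with one edge deleted; $C_4$ is the 4-cycle, and the join $G+H$ is obtained from the disjoint union of $G$ and $H$ by adding all edges between $V(G)$ and $V(H)$. A distinguishing coloring of a graph $G$ is a (not necessarily proper) vertex coloring such that the only automorphism of $G$ mapping every vertex to a vertex of the same color is the identity; the distinguishing number $D(G)$ is the minimum number of colors in a distinguishing coloring of $G$. Two distinct vertices $u,v$ are twins if $N_G(u)\setminus\{v\}=N_G(v)\setminus\{u\}$. The relation $u\equiv v$ iff $u=v$ or $u,v$ are twins is an equivalence relation; the class of $v$ is denoted $v^*$. The twin graph $G^*$ has the equivalence classes as vertices, distinct classes $u^*,v^*$ being adjacent iff $uv\in E(G)$. Each class induces a complete or an edgeless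 graph. A class $v^*$ is of type (1) if $|v^*|=1$, of type (K) if $|v^*|\ge 2$ and it induces a complete graph, and of type (N) if $|v^*|\ge2$ and it induces an edgeless graph; type (1K) means type (1) or (K), type (1N) means (1) or (N), and type (KN) means (K) or (N). *)

(* Defs.v *)
(* Finite simple graphs as symmetric irreflexive relations. *)
From mathcomp Require Import all_boot.
From mathcomp Require Import perm fingroup.
Set Implicit Arguments. Unset Strict Implicit. Unset Printing Implicit Defensive.

Section Graphs.
Variable T : finType.
Variable e : rel T.

Definition is_aut (s : {perm T}) : bool :=
  [forall x, forall y, e (s x) (s y) == e x y].

Definition distinguishing k (c : {ffun T -> 'I_k}) : bool :=
  [forall s : {perm T}, (is_aut s && [forall x, c (s x) == c x]) ==> (s == 1%g)].

Definition has_dist_col (k : nat) : bool :=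
  [exists c : {ffun T -> 'I_k}, distinguishing c].

Lemma has_dist_col_card : has_dist_col #|T|.
Proof.
apply/existsP; exists [ffun x => enum_rank x].
apply/forallP=> s; apply/implyP=> /andP[_ /forallP Hs].
apply/eqP/permP=> x; rewrite perm1.
by have /eqP := Hs x; rewrite !ffunE => /enum_rank_inj.
Qed.

Lemma has_dist_col_ex : exists k, has_dist_col k.
Proof. by exists #|T|; exact: has_dist_col_card. Qed.

Definition dist_number : nat := ex_minn has_dist_col_ex.

Definition twins (u v : T) : bool :=
  (u != v) && [forall w, (e u w && (w != v)) == (e v w && (w != u))].

Definition twin_equiv (u v : T) : bool := (u == v) || twins u v.

Definition twin_class (v : T) : {set T} := [set u | twin_equiv v u].

Definition twin_classes : {set {set T}} := [set twin_class v | v in T].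

Definition twin_adj (A B : {set T}) : bool :=
  (A != B) && [exists u in A, exists v in B, e u v].

Inductive vtype := T1 | TK | TN | T1K | T1N | TKN.

Definition is_type1 (A : {set T}) : bool := #|A| == 1.
Definition is_typeK (A : {set T}) : bool :=
  (2 <= #|A|) && [forall u in A, forall v in A, (u != v) ==> e u v].
Definition is_typeN (A : {set T}) : bool :=
  (2 <= #|A|) && [forall u in A, forall v in A, ~~ e u v].

Definition has_type (A : {set T}) (t : vtype) : bool :=
  match t with
  | T1 => is_type1 A
  | TK => is_typeK A
  | TN => is_typeN A
  | T1K => is_type1 A || is_typeK A
  | T1N => is_type1 A || is_typeN A
  | TKN => is_typeK A || is_typeN A
  end.

Definition twin_graph_is (m : nat) (H : rel 'I_m) (typs : seq vtype) : Prop :=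
  exists f : 'I_m -> {set T},
    [/\ injective f,
        forall i, f i \in twin_classes,
        forall A, A \in twin_classes -> exists i, f i = A,
        forall i j, twin_adj (f i) (f j) = H i j
      & forall i, has_type (f i) (nth T1 typs i)].

End Graphs.

Definition edges_rel (m : nat) (es : seq (nat * nat)) : rel 'I_m :=
  fun i j => ((val i, val j) \in es) || ((val j, val i) \in es).

(* K4 - e on {0,1,2,3}: 0,1 of degree 3, 2,3 of degree 2; plus a leaf 4 at 0 *)
Definition G7_graph : rel 'I_5 :=
  @edges_rel 5 [:: (0,1); (0,2); (0,3); (1,2); (1,3); (0,4)].
Definition G7_types : seq vtype := [:: T1K; T1K; TK; T1; T1].

(* K4 - e: 0,1 of degree 3 and 2,3 of degree 2 *)
Definition G8_graph : rel 'I_4 :=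
  @edges_rel 4 [:: (0,1); (0,2); (0,3); (1,2); (1,3)].
Definition G8_types : seq vtype := [:: TN; T1K; TK; T1].

Definition G9_graph : rel 'I_4 :=
  @edges_rel 4 [:: (0,1); (1,2); (2,3); (3,0)].
Definition G9_types : seq vtype := [:: TK; TK; T1; T1].

(* C4 + K1: cycle 0-1-2-3-0, vertex 4 adjacent to all *)
Definition G10_graph : rel 'I_5 :=
  @edges_rel 5 [:: (0,1); (1,2); (2,3); (3,0); (0,4); (1,4); (2,4); (3,4)].
Definition G10_types : seq vtype := [:: TK; TK; T1; T1; T1K].

(* Main.v *)
Require Import Defs.
From mathcomp Require Import all_boot perm fingroup zify.
Set Implicit Arguments. Unset Strict Implicit. Unset Printing Implicit Defensive.

Fixpoint lists (k m : nat) : seq (seq nat) :=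
  if k is k'.+1 then [seq x :: l | x <- iota 0 m, l <- lists k' m] else [:: [::]].
Definition relN (es : seq (nat * nat)) (a b : nat) : bool := ((a, b) \in es) || ((b, a) \in es).
Definition okcheck (es : seq (nat*nat)) m (cond : seq nat -> bool) :=
  all (fun l => (uniq l && all (fun i => all (fun j => relN es (nth 0 l i) (nth 0 l j) == relN es i j) (iota 0 m)) (iota 0 m) && cond l) ==> (l == iota 0 m)) (lists m m).

Lemma mem_lists m l : all (fun x => x < m) l -> l \in lists (size l) m.
Proof.
elim: l => [|x l IH] //= /andP[hx hl].
by apply: (allpairs_f (fun x l => x :: l)); rewrite ?mem_iota //; apply: IH.
Qed.

Lemma bridge m es cond (g : 'I_m -> 'I_m) : okcheck es m cond -> injective g ->
  (forall i j, edges_rel es (g i) (g j) = edges_rel es i j) ->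
  cond [seq val (g i) | i <- enum 'I_m] -> forall i, g i = i.
Proof.
move=> hok hinj hE hc.
set l := [seq val (g i) | i <- enum 'I_m].
have sz : size l = m by rewrite size_map size_enum_ord.
have nl : forall i (hi : i < m), nth 0 l i = g (Ordinal hi).
  move=> i hi; rewrite (nth_map (Ordinal hi)) ?size_enum_ord //.
  by rewrite (nth_ord_enum (Ordinal hi) (Ordinal hi)).
have lin : l \in lists m m.
  rewrite -{1}sz; apply: mem_lists; apply/allP=> x /mapP [i _ ->]; exact: ltn_ord.
have := allP hok l lin => /implyP H.
have /eqP hl : l == iota 0 m.
  apply: H; rewrite hc andbT; apply/andP; split.
    rewrite map_inj_uniq ?enum_uniq // => a b /val_inj; exact: hinj.
  apply/allP=> i; rewrite mem_iota => /andP[_ hi]; apply/allP=> j; rewrite mem_iota => /andP[_ hj].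
  rewrite (nl _ hi) (nl _ hj); apply/eqP; exact: (hE (Ordinal hi) (Ordinal hj)).
move=> i; apply: val_inj => /=.
have := nl _ (ltn_ord i); rewrite hl nth_iota // add0n => ->.
by congr (val (g _)); apply: val_inj.
Qed.
Section G.
Variable T : finType.
Variable e : rel T.
Hypothesis hsym : symmetric e.
Hypothesis hirr : irreflexive e.

Lemma autE s : is_aut e s -> forall x y, e (s x) (s y) = e x y.
Proof. by move/forallP=> H x y; apply/eqP; exact: (forallP (H x) y). Qed.

Lemma aut_inv s : is_aut e s -> is_aut e s^-1.
Proof.
move=> H; apply/forallP=> x; apply/forallP=> y.
by rewrite -(autE H) !permKV.
Qed.

Lemma twins_aut s u v : is_aut e s -> twins e u v -> twins e (s u) (s v).
Proof.
move=> H /andP[nuv /forallP Hw]; apply/andP; split.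
  by rewrite (inj_eq perm_inj).
apply/forallP=> w; rewrite -(permKV s w) !(autE H) !(inj_eq perm_inj).
exact: Hw.
Qed.

Lemma teq_aut1 s u v : is_aut e s -> twin_equiv e u v -> twin_equiv e (s u) (s v).
Proof.
move=> H /orP[/eqP->|h]; first by rewrite /twin_equiv eqxx.
by apply/orP; right; exact: twins_aut.
Qed.

Lemma teq_aut s u v : is_aut e s -> twin_equiv e (s u) (s v) = twin_equiv e u v.
Proof.
move=> H; apply/idP/idP; last exact: teq_aut1.
by move/(teq_aut1 (aut_inv H)); rewrite !permK.
Qed.

Lemma teq_sym u v : twin_equiv e u v = twin_equiv e v u.
Proof.
rewrite /twin_equiv /twins eq_sym; congr (_ || _); rewrite eq_sym; congr (_ && _).
by apply/eq_forallb=> w; rewrite eq_sym.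
Qed.

Lemma teq_trans u v w : twin_equiv e u v -> twin_equiv e v w -> twin_equiv e u w.
Proof.
move=> /orP[/eqP->//|Huv] /orP[/eqP<-|Hvw]; first by rewrite /twin_equiv Huv orbT.
case: (eqVneq u w) => [->|nuw]; first by rewrite /twin_equiv eqxx.
apply/orP; right; apply/andP; split => //.
move: Huv Hvw => /andP[nuv /forallP Huv] /andP[nvw /forallP Hvw].
apply/forallP=> x.
have A := eqP (Huv x); have B := eqP (Hvw x).
case: (eqVneq x u) => [->|xu]; first by rewrite hirr andbF.
  idtac.
case: (eqVneq x w) => [->|xw]; first by rewrite /= andbF hirr.
rewrite ?andbT.
case: (eqVneq x v) => [->|xv].
  have A' := eqP (Huv w); have B' := eqP (Hvw u).
  rewrite (eq_sym w v) nvw (eq_sym w u) nuw !andbT in A'.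
  rewrite nuw nuv !andbT in B'.
  by rewrite (hsym u v) B' (hsym w u) A' (hsym v w).
rewrite xv xu xw !andbT in A B.
by rewrite A B.
Qed.

Lemma mem_class v : v \in twin_class e v.
Proof. by rewrite inE /twin_equiv eqxx. Qed.

Lemma class_of_mem u v : u \in twin_class e v -> twin_class e u = twin_class e v.
Proof.
rewrite inE => h; apply/setP=> y; rewrite !inE; apply/idP/idP => hy.
  exact: teq_trans h hy.
by apply: teq_trans hy; rewrite teq_sym.
Qed.

Lemma class_aut s v : is_aut e s -> twin_class e (s v) = s @: twin_class e v.
Proof.
move=> H; apply/setP=> y; rewrite inE -{1}(permKV s y) teq_aut //.
apply/idP/imsetP.
  by move=> h; exists ((s^-1)%g y); rewrite ?inE ?permKV.
by case=> z zin ->; rewrite permK; rewrite inE in zin.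
Qed.

Lemma imsetK (s : {perm T}) (A : {set T}) : (s^-1)%g @: (s @: A) = A.
Proof.
rewrite -imset_comp -[RHS]imset_id; apply: eq_imset => x /=; exact: permK.
Qed.

Lemma twin_adj_aut s (A B : {set T}) : is_aut e s -> twin_adj e (s @: A) (s @: B) = twin_adj e A B.
Proof.
move=> hs; rewrite /twin_adj; congr (_ && _).
  congr negb; apply/eqP/eqP => [h|->//].
  by rewrite -(imsetK s A) h imsetK.
apply/existsP/existsP.
  case=> u /andP[/imsetP[u' u'A ->] /existsP[v /andP[/imsetP[v' v'B ->] huv]]].
  exists u'; rewrite u'A /=; apply/existsP; exists v'; by rewrite v'B -(autE hs).
case=> u /andP[uA /existsP[v /andP[vB huv]]].
exists (s u); rewrite imset_f //=; apply/existsP; exists (s v).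
by rewrite imset_f //= autE.
Qed.

End G.
Section F.
Variable T : finType.
Variable e : rel T.
Hypothesis hsym : symmetric e.
Hypothesis hirr : irreflexive e.

Lemma final m es cond (f : 'I_m -> {set T}) (i3 i2 : 'I_m) (w : T) :
  4 <= m -> okcheck es m cond -> injective f -> (forall i, f i \in twin_classes e) ->
  (forall A, A \in twin_classes e -> exists i, f i = A) ->
  (forall i j, twin_adj e (f i) (f j) = edges_rel es i j) ->
  f i3 = [set w] -> 2 <= #|f i2| ->
  (forall s g, is_aut e s -> injective g -> (forall i, s @: f i = f (g i)) -> g i3 = i3 ->
     cond [seq val (g i) | i <- enum 'I_m]) ->
  dist_number e <> #|T| - 2.
Proof.
move=> m4 hok hf hin hsur hE hi3 hi2 hcond.
have [r hr] : exists r : 'I_m -> T, forall j, f j = twin_class e (r j).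
  apply: (@fin_all_exists _ (fun _ => T) (fun j v => f j = twin_class e v)) => j.
  by have /imsetP[v _ ->] := hin j; exists v.
have rin j : r j \in f j by rewrite hr mem_class.
have clin x : twin_class e x \in twin_classes e by apply/imsetP; exists x.
have bound x : #|twin_class e x| + 3 <= #|T|.
  have [i <-] := hsur _ (clin x).
  set R := [set r j | j in 'I_m].
  have rinj : injective r by move=> a b h; apply: hf; rewrite !hr h.
  have cR : #|R| = m by rewrite card_imset // card_ord.
  have I : f i :&: R = [set r i].
    apply/setP=> y; rewrite !inE; apply/andP/eqP => [[yf /imsetP[j _ hj]] | ->].
      rewrite hj hr in yf; have := class_of_mem hsym hirr yf; rewrite -!hr => /hf hji.
      by rewrite hj hji.
    by split; [exact: rin | exact: imset_f].
  have := cardsUI (f i) R; rewrite I cards1 cR.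
  have := max_card (f i :|: R). lia.
have N5 : 5 <= #|T| by have := bound (r i2); rewrite -hr; lia.
have wcl : twin_class e w = [set w].
  have : w \in f i3 by rewrite hi3 set11.
  by rewrite hr => /(class_of_mem hsym hirr) ->; rewrite -hr.
set K := #|T| - 4.
pose c := [ffun x => (inord (index x (enum (twin_class e x)) + (x == w)) : 'I_K.+1)].
have cval x : val (c x) = index x (enum (twin_class e x)) + (x == w).
  rewrite ffunE /= inordK //; case: (eqVneq x w) => [->|xw].
    by rewrite wcl enum_set1 /= eqxx /=; rewrite /K; lia.
  rewrite addn0.
  have : index x (enum (twin_class e x)) < #|twin_class e x|.
    by rewrite cardE index_mem mem_enum mem_class.
  have := bound x; rewrite /K; lia.
have cinj x y : y \in twin_class e x -> c x = c y -> x = y.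
  move=> hy /(congr1 val); rewrite !cval (class_of_mem hsym hirr hy).
  case: (eqVneq x w) => [exw|xw].
    by rewrite exw wcl inE in hy; rewrite exw (eqP hy).
  case: (eqVneq y w) => [eyw|yw].
    have : x \in twin_class e x by apply: mem_class.
    by rewrite -(class_of_mem hsym hirr hy) eyw wcl inE (negbTE xw).
  rewrite !addn0 => hid.
  have xin : x \in enum (twin_class e x) by rewrite mem_enum mem_class.
  have yin : y \in enum (twin_class e x) by rewrite mem_enum.
  by rewrite -(nth_index x xin) hid nth_index.
have hd : distinguishing e c.
  apply/forallP=> s; apply/implyP=> /andP[hs /forallP hc].
  have hc' x : c (s x) = c x by apply/eqP.
  have sw : s w = w.
    have := congr1 val (hc' w); rewrite !cval (class_aut w hs) wcl imset_set1 !enum_set1 /= !eqxx /=.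
    by case: eqP.
  have [g hg] : exists g : 'I_m -> 'I_m, forall i, s @: f i = f (g i).
    apply: (@fin_all_exists _ (fun _ => 'I_m) (fun i j => s @: f i = f j)) => i.
    have : s @: f i \in twin_classes e by rewrite hr -(class_aut _ hs).
    by case/hsur => j hj; exists j.
  have ginj : injective g.
    move=> a b h; apply: hf.
    by rewrite -(imsetK s (f a)) hg h -hg imsetK.
  have gE i j : edges_rel es (g i) (g j) = edges_rel es i j.
    by rewrite -!hE -!hg twin_adj_aut.
  have g3 : g i3 = i3 by apply: hf; rewrite -hg hi3 imset_set1 sw.
  have gid := bridge hok ginj gE (hcond s g hs ginj hg g3).
  apply/eqP/permP => x; rewrite perm1.
  have [i hi] := hsur _ (clin x).
  have hsx : s x \in twin_class e x by rewrite -hi -(gid i) -hg imset_f // hi mem_class.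
  exact: esym (cinj _ _ hsx (esym (hc' x))).
have hk : has_dist_col e K.+1 by apply/existsP; exists c.
rewrite /dist_number; case: ex_minnP => n0 _ hmin.
have := hmin _ hk; rewrite /K; lia.
Qed.
End F.
Lemma c7 : okcheck [:: (0,1); (0,2); (0,3); (1,2); (1,3); (0,4)] 5 (fun l => nth 0 l 3 == 3).
Proof. vm_compute. reflexivity. Qed.
Lemma c8 : okcheck [:: (0,1); (0,2); (0,3); (1,2); (1,3)] 4 (fun l => (nth 0 l 3 == 3) && (nth 0 l 0 != 1)).
Proof. vm_compute. reflexivity. Qed.
Lemma c9 : okcheck [:: (0,1); (1,2); (2,3); (3,0)] 4 (fun l => (nth 0 l 3 == 3) && (nth 0 l 0 != 2)).
Proof. vm_compute. reflexivity. Qed.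
Lemma c10 : okcheck [:: (0,1); (1,2); (2,3); (3,0); (0,4); (1,4); (2,4); (3,4)] 5 (fun l => (nth 0 l 3 == 3) && (nth 0 l 0 != 2)).
Proof. vm_compute. reflexivity. Qed.

Lemma nth_gl n (g : 'I_n.+1 -> 'I_n.+1) k : k < n.+1 ->
  nth 0 [seq val (g i) | i <- enum 'I_n.+1] k = g (inord k).
Proof.
move=> hk; rewrite (nth_map ord0) ?size_enum_ord //.
have := nth_ord_enum ord0 (inord k : 'I_n.+1); rewrite inordK // => ->.
by [].
Qed.

Theorem lemma4p10 (T : finType) (e : rel T) :
  symmetric e -> irreflexive e ->
  [\/ twin_graph_is e G7_graph G7_types,
      twin_graph_is e G8_graph G8_types,
      twin_graph_is e G9_graph G9_types
    | twin_graph_is e G10_graph G10_types] ->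
  dist_number e <> #|T| - 2.
Proof.
move=> hsym hirr.
have g3E n (g : 'I_n.+1 -> 'I_n.+1) : 3 < n.+1 -> g (inord 3) = inord 3 ->
    nth 0 [seq val (g i) | i <- enum 'I_n.+1] 3 == 3.
  by move=> h3 hg; rewrite nth_gl // hg inordK.
case=> -[f [hf hin hsur hE hty]].
- have := hty (inord 3); rewrite inordK //= => /cards1P [w hw].
  have := hty (inord 2); rewrite inordK //= => /andP[h2 _].
  apply: (final hsym hirr (es := [:: (0,1); (0,2); (0,3); (1,2); (1,3); (0,4)]) _ c7 hf hin hsur hE hw h2) => //.
  by move=> s g _ _ _; apply: g3E.
- have := hty (inord 3); rewrite inordK //= => /cards1P [w hw].
  have := hty (inord 2); rewrite inordK //= => /andP[h2 _].
  apply: (final hsym hirr (es := [:: (0,1); (0,2); (0,3); (1,2); (1,3)]) _ c8 hf hin hsur hE hw h2) => //.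
  move=> s g hs _ hg g3; rewrite g3E //=; rewrite nth_gl //.
  apply/negP => /eqP h01.
  have g01 : g (inord 0) = inord 1 by apply: val_inj; rewrite /= inordK //; exact: h01.
  have := hty (inord 0); rewrite inordK //= => /andP[h0 /forallP hN].
  have := hty (inord 1); rewrite inordK //= -g01 -hg => /orP[/eqP|/andP[_ /forallP hK]].
    by rewrite (card_imset _ (@perm_inj _ s)); move=> h1; rewrite h1 in h0.
  have [u [v [hu hv huv]]] := card_gt1P h0.
  have := implyP (forallP (implyP (hK (s u)) (imset_f _ hu)) (s v)) (imset_f _ hv).
  rewrite (inj_eq perm_inj) huv (autE hs) /= => euv.
  by have := implyP (forallP (implyP (hN u) hu) v) hv; rewrite euv.
- have := hty (inord 3); rewrite inordK //= => /cards1P [w hw].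
  have := hty (inord 0); rewrite inordK //= => /andP[h0 _].
  apply: (final hsym hirr (es := [:: (0,1); (1,2); (2,3); (3,0)]) _ c9 hf hin hsur hE hw h0) => //.
  move=> s g hs _ hg g3; rewrite g3E //=; rewrite nth_gl //.
  apply/negP => /eqP h02.
  have g02 : g (inord 0) = inord 2 by apply: val_inj; rewrite /= inordK //; exact: h02.
  have := hty (inord 2); rewrite inordK //= /is_type1 -g02 -hg (card_imset _ (@perm_inj _ s)) => /eqP h.
  by rewrite h in h0.
- have := hty (inord 3); rewrite inordK //= => /cards1P [w hw].
  have := hty (inord 0); rewrite inordK //= => /andP[h0 _].
  apply: (final hsym hirr (es := [:: (0,1); (1,2); (2,3); (3,0); (0,4); (1,4); (2,4); (3,4)]) _ c10 hf hin hsur hE hw h0) => //.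
  move=> s g hs _ hg g3; rewrite g3E //=; rewrite nth_gl //.
  apply/negP => /eqP h02.
  have g02 : g (inord 0) = inord 2 by apply: val_inj; rewrite /= inordK //; exact: h02.
  have := hty (inord 2); rewrite inordK //= /is_type1 -g02 -hg (card_imset _ (@perm_inj _ s)) => /eqP h.
  by rewrite h in h0.
Qed.
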